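(* Let $X$ be a metric directed multigraph whose strongly connected components all have different total lengths, and let $(X_n,n\in\mathbb{N})$ be metric directed multigraphs with $d_{\vec{\mathcal G}}(X_n,X)\to0$. Then the strongly connected components of $X_n$, listed in decreasing order of total length and viewed as metric directed multigraphs, converge (componentwise, for $d_{\vec{\mathcal G}}$) to those of $X$, listed in decreasing order of total length.
   Context: A metric directed multigraph (MDM) is $(V,E,r,\ell)$ with $V,E$ finite sets, $r=(r_1,r_2):E\to V\times V$ (tail, head), and $\ell:E\to(0,\infty)$; its total length is $\sum_e\ell(e)$. Strongly connected components are maximal sub-multigraphs in which any vertex can reach any other by a directed path; they are viewed as MDMs with the inherited edge lengths. $d_{\vec{\mathcal G}}(X,X')=\inf\sup_{e\in E}|\ell(e)-\ell'(g(e))|$, infimum over graph isomorphisms $(f,g)$ (bijections $f:V\to V'$, $g:E\to E'$ with $r'(g(e))=(f(r_1(e)),f(r_2(e)))$), and $+\infty$ if none exists. *)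

(* Defs.v *)
From HB Require Import structures.
From mathcomp Require Import all_boot all_order all_algebra.
From mathcomp Require Import all_classical all_reals.
From mathcomp Require Import all_analysis.
Set Implicit Arguments. Unset Strict Implicit. Unset Printing Implicit Defensive.
Import Order.TTheory GRing.Theory Num.Theory.
Local Open Scope ring_scope.

(* A metric directed multigraph (V, E, r = (tail, head), l) with V, E finite
   and positive edge lengths. *)
Record mdm (R : realType) := MDM {
  mV : finType;
  mE : finType;
  mtail : mE -> mV;
  mhead : mE -> mV;
  mlen : mE -> R;
  mlen_pos : forall e, 0 < mlen e }.
Arguments mV {R} m.
Arguments mE {R} m.
Arguments mtail {R} m e.
Arguments mhead {R} m e.
Arguments mlen {R} m e.
Arguments mlen_pos {R} m e.

Section MDM.
Variable R : realType.
Implicit Types X Y : mdm R.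

Definition total_length X : R := \sum_(e : mE X) mlen X e.

Definition graph_iso X Y (f : mV X -> mV Y) (g : mE X -> mE Y) : Prop :=
  bijective f /\ bijective g /\
  forall e, mtail Y (g e) = f (mtail X e) /\ mhead Y (g e) = f (mhead X e).

(* sup_e |l(e) - l'(g e)| (taken to be 0 when E is empty) *)
Definition iso_dist X Y (g : mE X -> mE Y) : R :=
  \big[Num.max/0]_(e : mE X) `|mlen X e - mlen Y (g e)|.

(* d_G(X,Y) = inf over isomorphisms, +oo if none *)
Definition dG X Y : \bar R :=
  ereal_inf [set x : \bar R | exists (f : mV X -> mV Y) (g : mE X -> mE Y),
                 graph_iso f g /\ x = (iso_dist g)%:E].

Definition is_subgraph X (Vs : {set mV X}) (Es : {set mE X}) : Prop :=
  forall e, e \in Es -> mtail X e \in Vs /\ mhead X e \in Vs.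

Definition erel X (Es : {set mE X}) : rel (mV X) :=
  [rel u v | [exists e in Es, (mtail X e == u) && (mhead X e == v)]].

Definition strongly_connected X (Vs : {set mV X}) (Es : {set mE X}) : Prop :=
  Vs != finset.set0 /\ forall u v, u \in Vs -> v \in Vs -> connect (erel Es) u v.

Definition is_scc X (Vs : {set mV X}) (Es : {set mE X}) : Prop :=
  [/\ is_subgraph Vs Es, strongly_connected Vs Es &
   forall (Vs' : {set mV X}) (Es' : {set mE X}), Vs \subset Vs' -> Es \subset Es' ->
     is_subgraph Vs' Es' -> strongly_connected Vs' Es' -> Vs' = Vs /\ Es' = Es].

(* the sub-multigraph (Vs, Es) viewed as an MDM with inherited lengths
   (edges of Es with an endpoint outside Vs are dropped; for a genuine
   subgraph there are none) *)
Section Sub.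
Variables (X : mdm R) (Vs : {set mV X}) (Es : {set mE X}).
Definition subV := {v : mV X | v \in Vs}.
Definition subE :=
  {e : mE X | [&& e \in Es, mtail X e \in Vs & mhead X e \in Vs]}.
Lemma subE_tail (e : subE) : mtail X (val e) \in Vs.
Proof. by case/and3P: (valP e). Qed.
Lemma subE_head (e : subE) : mhead X (val e) \in Vs.
Proof. by case/and3P: (valP e). Qed.
Definition sub_mdm : mdm R :=
  @MDM R subV subE (fun e => exist _ (mtail X (val e)) (subE_tail e))
       (fun e => exist _ (mhead X (val e)) (subE_head e))
       (fun e => mlen X (val e)) (fun e => mlen_pos X (val e)).
End Sub.

Definition comp_length X (p : {set mV X} * {set mE X}) : R :=
  total_length (sub_mdm p.1 p.2).

Definition scc_list X (s : seq ({set mV X} * {set mE X})) : Prop :=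
  [/\ uniq s, (forall p, p \in s <-> is_scc p.1 p.2) &
      sorted (fun p q => comp_length q <= comp_length p) s].

Definition scc_mdms X (s : seq ({set mV X} * {set mE X})) : seq (mdm R) :=
  map (fun p => sub_mdm p.1 p.2) s.

(* empty MDM, used as default value for nth *)
Definition empty_mdm : mdm R :=
  @MDM R void void (fun e => match e with end) (fun e => match e with end)
       (fun e => match e with end) (fun e => match e with end).

End MDM.

(* Main.v *)
Require Import Defs.
From HB Require Import structures.
From mathcomp Require Import all_boot all_order all_algebra.
From mathcomp Require Import all_classical all_reals.
From mathcomp Require Import all_analysis.
From mathcomp Require Import lra.
Import Order.TTheory GRing.Theory Num.Theory.
Set Implicit Arguments. Unset Strict Implicit.
Local Open Scope classical_set_scope.
Local Open Scope ring_scope.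


Lemma connect_homo (T T' : finType) (e : rel T) (e' : rel T') (h : T -> T') :
  (forall x y, e x y -> e' (h x) (h y)) ->
  forall x y, connect e x y -> connect e' (h x) (h y).
Proof.
move=> H x y /connectP [p Hp ->].
elim: p x Hp => [|z p IH] x /=; first by rewrite connect0.
case/andP => exz Hp; apply: connect_trans (IH _ Hp).
by apply: connect1; apply: H.
Qed.

Section Hom.
Variables (R : realType) (Y X : mdm R) (f : mV Y -> mV X) (g : mE Y -> mE X).
Hypotheses (ht : forall e, mtail X (g e) = f (mtail Y e))
           (hh : forall e, mhead X (g e) = f (mhead Y e)).

Lemma sub_img (Vs : {set mV Y}) (Es : {set mE Y}) :
  is_subgraph Vs Es -> is_subgraph (f @: Vs) (g @: Es).
Proof.
move=> H e' /imsetP [e He ->]; rewrite ht hh.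
by case: (H e He) => a b; split; apply: imset_f.
Qed.

Lemma sc_img (Vs : {set mV Y}) (Es : {set mE Y}) :
  strongly_connected Vs Es -> strongly_connected (f @: Vs) (g @: Es).
Proof.
case=> ne H; split; first by rewrite imset_eq0.
move=> u v /imsetP [u0 Hu ->] /imsetP [v0 Hv ->].
apply: (@connect_homo _ _ (erel Es) _ f _ _ _ (H u0 v0 Hu Hv)).
move=> x y /existsP [e /and3P [He /eqP Ht /eqP Hh]].
by apply/existsP; exists (g e); rewrite imset_f //= ht hh Ht Hh !eqxx.
Qed.
End Hom.


Lemma comp_lengthE (R : realType) (Z : mdm R) (p : {set mV Z} * {set mE Z}) :
  comp_length p = \sum_(e | [&& e \in p.2, mtail Z e \in p.1 & mhead Z e \in p.1]) mlen Z e.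
Proof.
rewrite /comp_length /total_length /=.
by rewrite (big_sub [pred e | [&& e \in p.2, mtail Z e \in p.1 & mhead Z e \in p.1]]).
Qed.

Section Iso.
Variables (R : realType) (Y X : mdm R) (f : mV Y -> mV X) (g : mE Y -> mE X)
  (f' : mV X -> mV Y) (g' : mE X -> mE Y).
Hypotheses (fK : cancel f f') (f'K : cancel f' f) (gK : cancel g g') (g'K : cancel g' g)
  (ht : forall e, mtail X (g e) = f (mtail Y e))
  (hh : forall e, mhead X (g e) = f (mhead Y e)).

Lemma ht' e : mtail Y (g' e) = f' (mtail X e).
Proof. by rewrite -{2}(g'K e) ht fK. Qed.
Lemma hh' e : mhead Y (g' e) = f' (mhead X e).
Proof. by rewrite -{2}(g'K e) hh fK. Qed.

Lemma imsetKV (A : {set mV Y}) : f' @: (f @: A) = A.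
Proof. by rewrite -imset_comp (eq_imset _ fK) imset_id. Qed.
Lemma imsetKE (A : {set mE Y}) : g' @: (g @: A) = A.
Proof. by rewrite -imset_comp (eq_imset _ gK) imset_id. Qed.
Lemma imsetKV' (A : {set mV X}) : f @: (f' @: A) = A.
Proof. by rewrite -imset_comp (eq_imset _ f'K) imset_id. Qed.
Lemma imsetKE' (A : {set mE X}) : g @: (g' @: A) = A.
Proof. by rewrite -imset_comp (eq_imset _ g'K) imset_id. Qed.

Lemma scc_img (Vs : {set mV Y}) (Es : {set mE Y}) :
  is_scc Vs Es -> is_scc (f @: Vs) (g @: Es).
Proof.
case=> Hs Hc Hm; split; [exact: sub_img | exact: sc_img |].
move=> Vs' Es' sV sE Hs' Hc'.
have sV2 : Vs \subset f' @: Vs' by rewrite -{1}(imsetKV Vs) imsetS.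
have sE2 : Es \subset g' @: Es' by rewrite -{1}(imsetKE Es) imsetS.
case: (Hm _ _ sV2 sE2 (sub_img ht' hh' Hs') (sc_img ht' hh' Hc')) => <- <-.
by rewrite imsetKV' imsetKE'.
Qed.

Lemma scc_img' (Vs : {set mV X}) (Es : {set mE X}) :
  is_scc Vs Es -> is_scc (f' @: Vs) (g' @: Es).
Proof.
case=> Hs Hc Hm; split; [exact: (sub_img ht' hh' Hs) | exact: (sc_img ht' hh' Hc) |].
move=> Vs' Es' sV sE Hs' Hc'.
have sV2 : Vs \subset f @: Vs' by rewrite -{1}(imsetKV' Vs) imsetS.
have sE2 : Es \subset g @: Es' by rewrite -{1}(imsetKE' Es) imsetS.
case: (Hm _ _ sV2 sE2 (sub_img ht hh Hs') (sc_img ht hh Hc')) => <- <-.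
by rewrite imsetKV imsetKE.
Qed.

Definition D := iso_dist g.

Lemma D_ge0 : 0 <= D.
Proof. exact: bigmax_ge_id. Qed.


Definition phi (p : {set mV Y} * {set mE Y}) := (f @: p.1, g @: p.2).

Lemma len_close p : `|comp_length (phi p) - comp_length p| <= #|mE Y|%:R * D.
Proof.
rewrite !comp_lengthE /=.
rewrite (reindex g); last exact: onW_bij _ (Bijective gK g'K).
rewrite (eq_bigl (fun e => [&& e \in p.2, mtail Y e \in p.1 & mhead Y e \in p.1])); last first.
  by move=> e; rewrite /= ht hh !mem_imset //; apply: can_inj; eassumption.
rewrite -sumrB; apply: le_trans (ler_norm_sum _ _ _) _.
apply: (@le_trans _ _ (\sum_(e | [&& e \in p.2, mtail Y e \in p.1 & mhead Y e \in p.1]) D)).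
  apply: ler_sum => e _; rewrite distrC; exact: (le_bigmax _ (fun e => `|mlen Y e - mlen X (g e)|)).
rewrite big_mkcond /= mulr_natl.
have -> : D *+ #|mE Y| = \sum_(e : mE Y) D by rewrite sumr_const.
apply: ler_sum => e _.
by case: ifP => // _; exact: bigmax_ge_id.
Qed.

Lemma memV' (A : {set mV Y}) x : x \in f @: A -> f' x \in A.
Proof. by move=> H; rewrite -(imsetKV A) imset_f. Qed.
Lemma memE' (A : {set mE Y}) x : x \in g @: A -> g' x \in A.
Proof. by move=> H; rewrite -(imsetKE A) imset_f. Qed.

Variable (p : {set mV Y} * {set mE Y}).

Definition fs (v : subV p.1) : subV (f @: p.1) := exist _ (f (val v)) (imset_f f (valP v)).
Definition fs' (v : subV (f @: p.1)) : subV p.1 := exist _ (f' (val v)) (memV' (valP v)).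

Lemma pfE (e : subE p.1 p.2) :
  [&& g (val e) \in g @: p.2, mtail X (g (val e)) \in f @: p.1 & mhead X (g (val e)) \in f @: p.1].
Proof. by case/and3P: (valP e) => a b c; rewrite ht hh !imset_f. Qed.
Lemma pfE' (e : subE (f @: p.1) (g @: p.2)) :
  [&& g' (val e) \in p.2, mtail Y (g' (val e)) \in p.1 & mhead Y (g' (val e)) \in p.1].
Proof. by case/and3P: (valP e) => a b c; rewrite ht' hh' !memV' // memE'. Qed.

Definition gs (e : subE p.1 p.2) : subE (f @: p.1) (g @: p.2) := exist _ (g (val e)) (pfE e).
Definition gs' (e : subE (f @: p.1) (g @: p.2)) : subE p.1 p.2 := exist _ (g' (val e)) (pfE' e).

Lemma comp_dG : (dG (sub_mdm p.1 p.2) (sub_mdm (phi p).1 (phi p).2) <= D%:E)%E.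
Proof.
apply: (@le_trans _ _ (iso_dist (X:=sub_mdm p.1 p.2) (Y:=sub_mdm (phi p).1 (phi p).2) gs)%:E).
  apply: ereal_inf_lbound; exists fs, gs; split=> //; split.
    by exists fs' => v; apply: val_inj => /=; [exact: fK | exact: f'K].
  split; first by exists gs' => v; apply: val_inj => /=; [exact: gK | exact: g'K].
  by move=> e; split; apply: val_inj => /=; [exact: ht | exact: hh].
rewrite lee_fin; apply: bigmax_le; first exact: bigmax_ge_id.
move=> e _ /=; exact: (le_bigmax _ (fun e => `|mlen Y e - mlen X (g e)|)).
Qed.

End Iso.


Section Main.
Variables (R : realType) (Y X : mdm R) (f : mV Y -> mV X) (g : mE Y -> mE X)
  (f' : mV X -> mV Y) (g' : mE X -> mE Y).
Hypotheses (fK : cancel f f') (f'K : cancel f' f) (gK : cancel g g') (g'K : cancel g' g)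
  (ht : forall e, mtail X (g e) = f (mtail Y e))
  (hh : forall e, mhead X (g e) = f (mhead Y e)).
Variables (delta : R) (s : seq ({set mV X} * {set mE X})) (t : seq ({set mV Y} * {set mE Y})).
Hypotheses (Hd : forall p q : {set mV X} * {set mE X}, is_scc p.1 p.2 -> is_scc q.1 q.2 -> p <> q ->
   delta <= `|comp_length p - comp_length q|)
  (Hs : scc_list s) (Ht : scc_list t)
  (Hsmall : 2 * (#|mE Y|%:R * D g) < delta).

Lemma map_phi : map (phi f g) t = s.
Proof.
case: Hs => us Hsm Hss; case: Ht => ut Htm Hts.
set K := #|mE Y|%:R * D g.
have K0 : 0 <= K by apply: mulr_ge0 => //; exact: bigmax_ge_id.
move: Hsmall; rewrite -/K => Hsm2.
have dpos : 0 < delta.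
  by lra.
have phi_inj : injective (phi f g).
  case=> [a b] [c d] [] /(imset_inj (can_inj fK)) -> /(imset_inj (can_inj gK)) -> //.
have mem_eq : map (phi f g) t =i s.
  move=> x; apply/idP/idP.
  - case/mapP => p pt ->; apply/(Hsm _).2; apply: (scc_img fK f'K gK g'K ht hh).
    exact: (Htm p).1 pt.
  - move=> xs; have sx := (Hsm x).1 xs.
    have /(Htm (_, _)).2 yt := scc_img' fK f'K gK g'K ht hh sx.
    have -> : x = phi f g (f' @: x.1, g' @: x.2).
      by case: x {xs sx yt} => a b; rewrite /phi /= imsetKV' // imsetKE'.
    exact: map_f.
pose e' := fun p q : {set mV X} * {set mE X} => (p == q) || (comp_length q < comp_length p).
have e'tr : transitive e'.
  move=> b a c /orP[/eqP->|h1] /orP[/eqP<-|h2]; rewrite /e' ?eqxx ?h1 ?h2 ?orbT //.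
  by rewrite (lt_trans h2 h1) orbT.
have e'as : antisymmetric e'.
  move=> a b /andP[/orP[/eqP//|h1] /orP[/eqP//|h2]].
  by have := lt_trans h1 h2; rewrite ltxx.
apply: (sorted_eq e'tr e'as).
- rewrite sorted_map; apply: (sub_in_sorted (P := mem t)); last exact: Hts.
  + move=> a b ha hb /= hle; rewrite /e'.
    case: eqVneq => [//|neq] /=.
    have pa : phi f g a \in s by rewrite -mem_eq map_f.
    have pb : phi f g b \in s by rewrite -mem_eq map_f.
    have neq' : phi f g a <> phi f g b by move=> E; rewrite E eqxx in neq.
    have d := Hd ((Hsm _).1 pa) ((Hsm _).1 pb) neq'.
    have la := len_close fK gK g'K ht hh a.
    have lb := len_close fK gK g'K ht hh b.
    rewrite -/K in la lb.
    move: d la lb hle; rewrite ler_normr !ler_norml.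
    set A := comp_length (phi f g a); set B := comp_length (phi f g b).
    set a0 := comp_length a; set b0 := comp_length b.
    move=> d /andP[la1 la2] /andP[lb1 lb2] hle'.
    case/orP: d => d; lra.
  + by apply/allP.
- apply: (sub_in_sorted (P := mem s)); last exact: Hss.
  + move=> a b ha hb /= hle; rewrite /e'.
    case: eqVneq => [//|neq] /=.
    have neq' : a <> b by move=> E; rewrite E eqxx in neq.
    have d := Hd ((Hsm _).1 ha) ((Hsm _).1 hb) neq'.
    rewrite lt_neqAle hle andbT; apply/negP => /eqP E.
    by move: d; rewrite E subrr normr0; lra.
  + by apply/allP.
- apply: uniq_perm => //; first by rewrite (map_inj_uniq phi_inj).
Qed.

End Main.


Lemma delta_ex (R : realType) (X : mdm R) (s : seq ({set mV X} * {set mE X})) :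
  scc_list s ->
  (forall p q : {set mV X} * {set mE X},
      is_scc p.1 p.2 -> is_scc q.1 q.2 -> p <> q ->
      comp_length p <> comp_length q) ->
  exists2 delta : R, 0 < delta & forall p q : {set mV X} * {set mE X},
    is_scc p.1 p.2 -> is_scc q.1 q.2 -> p <> q -> delta <= `|comp_length p - comp_length q|.
Proof.
case=> us Hsm Hss Hdist.
pose P := fun pq : ({set mV X} * {set mE X}) * ({set mV X} * {set mE X}) =>
  [&& pq.1 \in s, pq.2 \in s & pq.1 != pq.2].
exists (\big[Num.min/1]_(pq | P pq) `|comp_length pq.1 - comp_length pq.2|).
  apply: lt_bigmin => // pq /and3P [h1 h2 h3].
  rewrite normr_gt0 subr_eq0; apply/eqP.
  apply: Hdist; [exact: (Hsm _).1 | exact: (Hsm _).1 | exact/eqP].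
move=> p q hp hq neq.
apply: (bigmin_le_cond _ (j := (p, q))).
by rewrite /P /= (Hsm p).2 // (Hsm q).2 //=; apply/eqP.
Qed.

Lemma near_iso (R : realType) (X : mdm R) (Xn : nat -> mdm R) :
  (fun n => dG (Xn n) X) @ \oo --> 0%E ->
  forall eps : R, 0 < eps -> \forall n \near \oo,
    exists (f : mV (Xn n) -> mV X) (g : mE (Xn n) -> mE X), graph_iso f g /\ iso_dist g < eps.
Proof.
move/fine_cvgP => [fin cv] eps he.
move/cvgr0Pnorm_lt: cv => /(_ eps he) cv'.
apply: filterS2 fin cv' => n hfin hlt.
have : (dG (Xn n) X < eps%:E)%E.
  rewrite -(fineK hfin) lte_fin; apply: le_lt_trans hlt; exact: ler_norm.
case/ereal_inf_lt => y [f [g [Hiso ->]]]; rewrite lte_fin => Hl.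
by exists f, g.
Qed.

Lemma cvg0_of (R : realType) (u : nat -> \bar R) :
  (forall n, (0 <= u n)%E) ->
  (forall eps : R, 0 < eps -> \forall n \near \oo, (u n <= eps%:E)%E) ->
  u @ \oo --> 0%E.
Proof.
move=> H0 H; apply/fine_cvgP; split.
  apply: filterS (H 1 ltr01) => n; have := H0 n.
  by case: (u n).
apply/cvgr0Pnorm_lt => eps he.
have he2 : 0 < eps / 2 by rewrite divr_gt0.
apply: filterS (H _ he2) => n /=; have := H0 n.
case: (u n) => [r||] //=; rewrite !lee_fin => h0 h1.
rewrite ger0_norm //; lra.
Qed.

Lemma step (R : realType) (Y X : mdm R) (f : mV Y -> mV X) (g : mE Y -> mE X) (delta : R)
  (s : seq ({set mV X} * {set mE X})) (t : seq ({set mV Y} * {set mE Y})) :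
  (forall p q : {set mV X} * {set mE X}, is_scc p.1 p.2 -> is_scc q.1 q.2 -> p <> q ->
   delta <= `|comp_length p - comp_length q|) ->
  scc_list s -> scc_list t -> graph_iso f g ->
  2 * (#|mE X|%:R * iso_dist g) < delta ->
  size t = size s /\ forall i, (i < size s)%N ->
    (dG (nth (empty_mdm R) (scc_mdms t) i) (nth (empty_mdm R) (scc_mdms s) i) <= (iso_dist g)%:E)%E.
Proof.
move=> Hd Hs Ht [[f' fK f'K] [[g' gK g'K] hom]] Hsmall.
have ht e : mtail X (g e) = f (mtail Y e) by case: (hom e).
have hh e : mhead X (g e) = f (mhead Y e) by case: (hom e).
have cardE : #|mE Y| = #|mE X| := bij_eq_card (Bijective gK g'K).
rewrite -cardE in Hsmall.
have Hmap := map_phi fK f'K gK g'K ht hh Hd Hs Ht Hsmall.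
rewrite -Hmap size_map; split=> // i hi.
rewrite /scc_mdms.
rewrite (nth_map ((finset.set0, finset.set0) : {set mV Y} * {set mE Y})) //.
rewrite (nth_map ((finset.set0, finset.set0) : {set mV X} * {set mE X})) ?size_map //.
rewrite (nth_map ((finset.set0, finset.set0) : {set mV Y} * {set mE Y})) //.
exact: (comp_dG fK f'K gK g'K ht hh).
Qed.

Unset Implicit Arguments.

Theorem proposition5p3 (R : realType) (X : mdm R) (Xn : nat -> mdm R) :
  (forall p q : {set mV X} * {set mE X},
      is_scc p.1 p.2 -> is_scc q.1 q.2 -> p <> q ->
      comp_length p <> comp_length q) ->
  (fun n => dG (Xn n) X) @ \oo --> 0%E ->
  forall (s : seq ({set mV X} * {set mE X}))
         (sn : forall n, seq ({set mV (Xn n)} * {set mE (Xn n)})),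
    scc_list s -> (forall n, scc_list (sn n)) ->
    (\forall n \near \oo, size (sn n) = size s) /\
    (forall i, (i < size s)%N ->
       (fun n => dG (nth (empty_mdm R) (scc_mdms (sn n)) i)
                    (nth (empty_mdm R) (scc_mdms s) i)) @ \oo --> 0%E).
Proof.
move=> Hdist Hcv s sn Hs Hsn.
have [delta dpos Hd] := delta_ex Hs Hdist.
set N : R := #|mE X|%:R.
have N0 : 0 <= N by rewrite /N ler0n.
pose eps0 := delta / (2 * (N + 1)).
have e0pos : 0 < eps0 by rewrite /eps0 divr_gt0 // mulr_gt0 //; lra.
have small : forall x : R, 0 <= x -> x < eps0 -> 2 * (N * x) < delta.
  move=> x x0 hx.
  have h2 : 2 * (N + 1) * x < delta.
    by rewrite mulrC -ltr_pdivlMr ?mulr_gt0 //; lra.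
  nra.
have iso_ge0 (Y Z : mdm R) (g : mE Y -> mE Z) : 0 <= iso_dist g by exact: bigmax_ge_id.
split.
  apply: filterS (near_iso Hcv e0pos) => n [f [g [Hiso Hlt]]].
  by case: (step Hd Hs (Hsn n) Hiso (small _ (iso_ge0 _ _ g) Hlt)).
move=> i hi; apply: cvg0_of.
  move=> n; apply/ereal_infP => y [f [g [_ ->]]].
  by rewrite lee_fin; exact: bigmax_ge_id.
move=> eps he.
have hm : 0 < Num.min eps eps0 by rewrite lt_min he e0pos.
apply: filterS (near_iso Hcv hm) => n [f [g [Hiso Hlt]]].
move: Hlt; rewrite lt_min => /andP [Hl1 Hl2].
case: (step Hd Hs (Hsn n) Hiso (small _ (iso_ge0 _ _ g) Hl2)) => _ H.
apply: le_trans (H i hi) _; rewrite lee_fin; exact: ltW.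
Qed.
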